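(* Let $\mathcal{F}=(W,\preceq,\mathcal{V})$ be a finite poset model and $w_1,w_2\in W$. If $w_1\equiv_\gamma w_2$ then $w_1\equiv_\eta w_2$.
   Context: Fix a set PL of proposition letters. A poset model is $\mathcal{F}=(W,\preceq,\mathcal{V})$ with $(W,\preceq)$ a partial order and $\mathcal{V}:\mathrm{PL}\to\mathcal{P}(W)$. For $m,n\in\mathbb{N}$, $[m;n]=\{i: m\le i\le n\}$, $[m;n)=\{i:m\le i<n\}$, $(m;n)=\{i:m<i<n\}$. An undirected path of length $\ell$ from $w$ is $\pi:[0;\ell]\to W$ with $\pi(0)=w$ and, for each $i\in[0;\ell)$, $\pi(i)\preceq\pi(i+1)$ or $\pi(i+1)\preceq\pi(i)$. A $\pm$-path is an undirected path of length $\ell\ge2$ with $\pi(0)\preceq\pi(1)$ and $\pi(\ell)\preceq\pi(\ell-1)$. Formulas are built by $\Phi::=p\mid\neg\Phi\mid\Phi_1\wedge\Phi_2\mid M(\Phi_1,\Phi_2)$, $p\in\mathrm{PL}$, with $M=\eta$ in SLCS$_\eta$ and $M=\gamma$ in SLCS$_\gamma$. Semantics on $\mathcal{F}$: $w\models p$ iff $w\in\mathcal{V}(p)$; negation and conjunction as usual; $w\models\gamma(\Phi_1,\Phi_2)$ iff there is a $\pm$-path $\pi:[0;\ell]\to W$ from $w$ with $\pi(\ell)\models\Phi_2$ and $\pi(i)\models\Phi_1$ for all $i\in(0;\ell)$; $w\models\eta(\Phi_1,\Phi_2)$ iff there is a $\pm$-path $\pi:[0;\ell]\to W$ from $w$ with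 $\pi(\ell)\models\Phi_2$ and $\pi(i)\models\Phi_1$ for all $i\in[0;\ell)$. $w_1\equiv_\gamma w_2$ (resp. $\equiv_\eta$) means $w_1,w_2$ satisfy the same SLCS$_\gamma$ (resp. SLCS$_\eta$) formulas in $\mathcal{F}$. *)

(* Defs.v *)
From mathcomp Require Import all_boot.
Set Implicit Arguments. Unset Strict Implicit. Unset Printing Implicit Defensive.

Record poset_model (PL : Type) := PosetModel {
  pm_W :> finType;
  pm_le : rel pm_W;
  pm_V : PL -> pred pm_W;
  pm_refl : reflexive pm_le;
  pm_antisym : antisymmetric pm_le;
  pm_trans : transitive pm_le
}.

Section Semantics.
Variable PL : Type.
Variable F : poset_model PL.
Local Notation W := (pm_W F).
Local Notation le := (@pm_le PL F).

(* an undirected path of length l: pi restricted to [0;l] *)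
Definition undirected_path (pi : nat -> W) (l : nat) : Prop :=
  forall i, i < l -> le (pi i) (pi i.+1) \/ le (pi i.+1) (pi i).

Definition pm_path (w : W) (pi : nat -> W) (l : nat) : Prop :=
  2 <= l /\ pi 0 = w /\ undirected_path pi l /\
  le (pi 0) (pi 1) /\ le (pi l) (pi l.-1).

End Semantics.

Inductive modality := MGamma | MEta.

Inductive form (PL : Type) :=
| FVar of PL
| FNeg of form PL
| FAnd of form PL & form PL
| FM of form PL & form PL.

Fixpoint sat (PL : Type) (F : poset_model PL) (m : modality)
    (phi : form PL) (w : pm_W F) : Prop :=
  match phi with
  | FVar p => @pm_V PL F p w
  | FNeg f => ~ @sat PL F m f w
  | FAnd f g => @sat PL F m f w /\ @sat PL F m g w
  | FM f g =>
      match m with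
      | MGamma => exists (pi : nat -> pm_W F) (l : nat),
          @pm_path PL F w pi l /\ @sat PL F m g (pi l) /\
          (forall i, 0 < i < l -> @sat PL F m f (pi i))
      | MEta => exists (pi : nat -> pm_W F) (l : nat),
          @pm_path PL F w pi l /\ @sat PL F m g (pi l) /\
          (forall i, i < l -> @sat PL F m f (pi i))
      end
  end.

Definition log_equiv (PL : Type) (F : poset_model PL) (m : modality)
    (w1 w2 : pm_W F) : Prop :=
  forall phi : form PL, @sat PL F m phi w1 <-> @sat PL F m phi w2.

(* Main.v *)
Require Import Defs.
From mathcomp Require Import all_boot.
From Stdlib Require Import Setoid Morphisms.

Fixpoint tr {PL : Type} (phi : form PL) : form PL :=
  match phi with
  | FVar p => FVar p
  | FNeg f => FNeg (tr f)
  | FAnd f g => FAnd (tr f) (tr g)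
  | FM f g => FAnd (tr f) (FM (tr f) (tr g))
  end.

Lemma tr_ok (PL : Type) (F : poset_model PL) (phi : form PL) :
  forall w : pm_W F, @sat PL F MEta phi w <-> @sat PL F MGamma (tr phi) w.
Proof.
elim: phi => [p|f IH|f IHf g IHg|f IHf g IHg] w /=.
- by [].
- by rewrite IH.
- by rewrite IHf IHg.
- split.
  + move=> [pi [l [Hp [Hg Hf]]]].
    have H0 : pi 0 = w by case: Hp => _ [].
    split.
      rewrite -IHf -H0; apply: Hf; case: Hp => Hl _; exact: leq_trans Hl.
    exists pi, l; split=> //; split; first by rewrite -IHg.
    move=> i /andP [_ Hi]; rewrite -IHf; exact: Hf.
  + move=> [Hw [pi [l [Hp [Hg Hf]]]]].
    have H0 : pi 0 = w by case: Hp => _ [].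
    exists pi, l; split=> //; split; first by rewrite IHg.
    move=> i; case: i => [|i] Hi; first by rewrite H0 IHf.
    rewrite IHf; apply: Hf; by rewrite Hi.
Qed.

Theorem proposition3 (PL : Type) (F : poset_model PL) (w1 w2 : pm_W F) :
  @log_equiv PL F MGamma w1 w2 -> @log_equiv PL F MEta w1 w2.
Proof.
move=> H phi; rewrite !tr_ok; exact: H.
Qed.
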